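(* Let $E\to M$ be a holomorphic Lie algebroid of rank $m$ over a complex $n$-manifold with $\operatorname{rank}\rho=m<n$, let $(T'M,L)$ be a complex Lagrange space with Chern–Lagrange nonlinear connection $N^i_k=g^{\bar j i}\frac{\partial^2L}{\partial z^k\partial\bar\eta^j}$, and let $N^\alpha_k(z,u)=\rho^\alpha_i\big(N^i_k(z,\eta)+u^\gamma\frac{\partial\rho^i_\gamma}{\partial z^k}\big)$, $\eta^i=\rho^i_\gamma u^\gamma$, be the nonlinear connection induced on $E$ by it. Let $L^*(z,u)=L(z,\rho(z)u)$ and $g_{\alpha\bar\beta}=\frac{\partial^2L^*}{\partial u^\alpha\partial\bar u^\beta}=\rho^i_\alpha\overline{\rho^j_\beta}g_{i\bar j}$, with inverse $g^{\bar\beta\alpha}$. Then \[ N^\alpha_k=g^{\bar\beta\alpha}\frac{\partial^2L^*}{\partial z^k\partial\bar u^\beta}, \] where $\partial/\partial z^k$ is taken in the coordinates $(z,u)$ of $E$.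
   Context: Coordinates $(z^k,\eta^k)$ on $T'M$ and $(z^k,u^\alpha)$ on $E$; the anchor has holomorphic coefficients $\rho^k_\alpha(z)$. $(T'M,L)$: $L$ real function on $T'M$ with nondegenerate metric tensor $g_{i\bar j}=\partial^2L/\partial\eta^i\partial\bar\eta^j$, inverse $g^{\bar j i}$ ($g^{\bar ji}g_{k\bar j}=\delta^i_k$); $g^{\bar\beta\alpha}g_{\gamma\bar\beta}=\delta^\alpha_\gamma$. At each point (with $\eta=\rho u$) the vectors $\rho^k_\alpha\partial/\partial\eta^k$ are completed by vectors $Y_a=Y^k_a\partial/\partial\eta^k$, $a=1,\dots,n-m$, with $g_{i\bar j}Y^i_a\overline{\rho^j_\alpha}=0$ and $g_{i\bar j}Y^i_a\overline{Y^j_b}=\delta_{ab}$; the matrix $R=[\rho^i_\alpha;Y^i_a]$ is invertible and $\rho^\alpha_i$, $Y^a_i$ denote the rows of $R^{-1}$: $\rho^\alpha_i\rho^i_\beta=\delta^\alpha_\beta$, $\rho^\alpha_iY^i_a=0$, $Y^a_i\rho^i_\alpha=0$, $Y^a_iY^i_b=\delta^a_b$, $\rho^j_\alpha\rho^\alpha_i+Y^j_aY^a_i=\delta^j_i$. *)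

(* Defs.v *)
From HB Require Import structures.
From mathcomp Require Import all_boot all_order all_algebra.
From mathcomp Require Import all_classical all_reals all_analysis.
From mathcomp Require Import complex.
Set Implicit Arguments. Unset Strict Implicit. Unset Printing Implicit Defensive.
Import Order.TTheory GRing.Theory Num.Theory.
Import numFieldNormedType.Exports.
Local Open Scope ring_scope.

Definition cre (R : realType) (x : R[i]) : R := let: Complex a _ := x in a.
Definition cim (R : realType) (x : R[i]) : R := let: Complex _ b := x in b.

(* A point of C^n, encoded by its real and imaginary parts (x, y) in R^n x R^n. *)
Definition cvec (R : realType) (n : nat) := ('rV[R]_n * 'rV[R]_n)%type.

Definition cvec_to (R : realType) (n : nat) (x : cvec R n) (i : 'I_n) : R[i] :=
  Complex (x.1 0 i) (x.2 0 i).

Definition cvec_of (R : realType) (n : nat) (v : 'I_n -> R[i]) : cvec R n :=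
  (\row_i cre (v i), \row_i cim (v i)).

Definition dirRe (R : realType) (n : nat) (k : 'I_n) : cvec R n :=
  (delta_mx 0 k, 0).
Definition dirIm (R : realType) (n : nat) (k : 'I_n) : cvec R n :=
  (0, delta_mx 0 k).

Definition cD (R : realType) (V : normedModType R) (f : V -> R[i]) (p v : V) : R[i] :=
  Complex (derive (fun q => cre (f q)) p v) (derive (fun q => cim (f q)) p v).

Definition wz (R : realType) (V : normedModType R) (f : V -> R[i]) (p vx vy : V) : R[i] :=
  (cD f p vx - 'i * cD f p vy) / 2%:R.
Definition wzb (R : realType) (V : normedModType R) (f : V -> R[i]) (p vx vy : V) : R[i] :=
  (cD f p vx + 'i * cD f p vy) / 2%:R.

Definition dz1 (R : realType) (n : nat) (f : cvec R n -> R[i]) (z : cvec R n) (k : 'I_n) :=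
  wz f z (@dirRe R n k) (@dirIm R n k).
Definition dzb1 (R : realType) (n : nat) (f : cvec R n -> R[i]) (z : cvec R n) (k : 'I_n) :=
  wzb f z (@dirRe R n k) (@dirIm R n k).

Definition dZ (R : realType) (n p : nat) (f : cvec R n * cvec R p -> R[i])
  (q : cvec R n * cvec R p) (k : 'I_n) : R[i] :=
  wz f q (@dirRe R n k, 0) (@dirIm R n k, 0).
Definition dW (R : realType) (n p : nat) (f : cvec R n * cvec R p -> R[i])
  (q : cvec R n * cvec R p) (i : 'I_p) : R[i] :=
  wz f q (0, @dirRe R p i) (0, @dirIm R p i).
Definition dWb (R : realType) (n p : nat) (f : cvec R n * cvec R p -> R[i])
  (q : cvec R n * cvec R p) (i : 'I_p) : R[i] :=
  wzb f q (0, @dirRe R p i) (0, @dirIm R p i).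

Definition liftC (R : realType) (V : Type) (L : V -> R) : V -> R[i] :=
  fun q => Complex (L q) 0.

Definition holomorphic (R : realType) (n : nat) (f : cvec R n -> R[i]) : Prop :=
  forall z : cvec R n,
    [/\ differentiable (fun q => cre (f q)) z,
        differentiable (fun q => cim (f q)) z &
        forall k, dzb1 f z k = 0].

Definition twice_differentiable (R : realType) (V : normedModType R) (L : V -> R) : Prop :=
  (forall p : V, differentiable L p) /\
  (forall (v p : V), differentiable (fun q => derive L q v) p).

(* Metric tensor g_{i jbar} = d^2 L / d eta^i d etabar^j on T'M, coordinates (z, eta). *)
Definition gTM (R : realType) (n : nat) (L : cvec R n * cvec R n -> R)
  (q : cvec R n * cvec R n) : 'M[R[i]]_n :=
  \matrix_(i, j) dW (fun q' => dWb (liftC L) q' j) q i.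

(* Chern-Lagrange nonlinear connection
   N^i_k = g^{jbar i} d^2 L / dz^k detabar^j,  with g^{jbar i} = (invmx g) j i
   (so that sum_j g^{jbar i} g_{k jbar} = delta^i_k). *)
Definition NCL (R : realType) (n : nat) (L : cvec R n * cvec R n -> R)
  (q : cvec R n * cvec R n) (i k : 'I_n) : R[i] :=
  \sum_j (invmx (gTM L q)) j i * dZ (fun q' => dWb (liftC L) q' j) q k.

Definition eta_of (R : realType) (n m : nat) (rho : cvec R n -> 'M[R[i]]_(n, m))
  (q : cvec R n * cvec R m) : cvec R n :=
  cvec_of (fun i => \sum_g rho q.1 i g * cvec_to q.2 g).

Definition Lstar (R : realType) (n m : nat) (L : cvec R n * cvec R n -> R)
  (rho : cvec R n -> 'M[R[i]]_(n, m)) (q : cvec R n * cvec R m) : R :=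
  L (q.1, eta_of rho q).

Definition gE (R : realType) (n m : nat) (L : cvec R n * cvec R n -> R)
  (rho : cvec R n -> 'M[R[i]]_(n, m)) (q : cvec R n * cvec R m) : 'M[R[i]]_m :=
  \matrix_(a, b) dW (fun q' => dWb (liftC (Lstar L rho)) q' b) q a.

Definition Rmat (R : realType) (n m : nat) (hmn : (m <= n)%N)
  (rh : 'M[R[i]]_(n, m)) (Y : 'M[R[i]]_(n, n - m)) : 'M[R[i]]_n :=
  castmx (erefl n, subnKC hmn) (row_mx rh Y).

Definition rho_inv (R : realType) (n m : nat) (hmn : (m <= n)%N)
  (rh : 'M[R[i]]_(n, m)) (Y : 'M[R[i]]_(n, n - m)) (a : 'I_m) (i : 'I_n) : R[i] :=
  invmx (Rmat hmn rh Y) (widen_ord hmn a) i.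

(* Main.v *)
Require Import Defs.
From HB Require Import structures.
From mathcomp Require Import all_boot all_order all_algebra.
From mathcomp Require Import all_classical all_reals all_analysis.
From mathcomp Require Import complex.
From mathcomp Require Import ring lra.
Set Implicit Arguments. Unset Strict Implicit. Unset Printing Implicit Defensive.
Import Order.TTheory GRing.Theory Num.Theory.
Import numFieldNormedType.Exports.
Local Open Scope ring_scope.

Section Gen.
Variable R : realType.
Implicit Types V W : normedModType R.

Definition cdiffC V (f : V -> R[i]) :=
  forall p, differentiable (fun q => cre (f q)) p /\ differentiable (fun q => cim (f q)) p.

Lemma cD_Complex V (h1 h2 : V -> R) p v :
  (forall p, differentiable h1 p) -> (forall p, differentiable h2 p) ->
  cdiffC (fun q => Complex (h1 q) (h2 q)) /\
  cD (fun q => Complex (h1 q) (h2 q)) p v = Complex ('D_v h1 p) ('D_v h2 p).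
Proof. by move=> d1 d2; split => // q; split; [exact: d1|exact: d2]. Qed.

Lemma cdf_add V (f g : V -> R[i]) : cdiffC f -> cdiffC g ->
  cdiffC (fun q => f q + g q) /\ forall p v, cD (fun q => f q + g q) p v = cD f p v + cD g p v.
Proof.
move=> df dg.
have e1 : (fun q => cre (f q + g q)) = (fun q => cre (f q)) + (fun q => cre (g q)).
  by apply: funext => q; rewrite [RHS]/GRing.add /=; case: (f q) => ? ?; case: (g q).
have e2 : (fun q => cim (f q + g q)) = (fun q => cim (f q)) + (fun q => cim (g q)).
  by apply: funext => q; rewrite [RHS]/GRing.add /=; case: (f q) => ? ?; case: (g q).
split.
  move=> p; rewrite e1 e2; have [? ?] := df p; have [? ?] := dg p.
  by split; apply: differentiableD.
move=> p v; rewrite /cD e1 e2; have [? ?] := df p; have [? ?] := dg p.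
by rewrite !deriveD //; try exact: diff_derivable.
Qed.

Lemma der_comp (U V W : normedModType R) (F : V -> W) (phi : U -> V) q v :
  differentiable phi q -> differentiable F (phi q) ->
  'D_v (F \o phi) q = 'D_('D_v phi q) F (phi q).
Proof.
move=> dp dF; rewrite !deriveE //; last exact: differentiable_comp.
by rewrite diff_comp.
Qed.

Lemma cdf_comp (U V : normedModType R) (f : V -> R[i]) (phi : U -> V) : cdiffC f ->
  (forall q, differentiable phi q) ->
  cdiffC (fun q => f (phi q)) /\ forall p v, cD (fun q => f (phi q)) p v = cD f (phi p) ('D_v phi p).
Proof.
move=> df dp; split.
  move=> p; have [? ?] := df (phi p); split.
    exact: (@differentiable_comp _ _ _ _ phi (fun q => cre (f q))).
  exact: (@differentiable_comp _ _ _ _ phi (fun q => cim (f q))).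
move=> p v; have [? ?] := df (phi p); rewrite /cD.
by rewrite (@der_comp _ _ _ (fun q => cre (f q)) phi) // (@der_comp _ _ _ (fun q => cim (f q)) phi).
Qed.

Lemma cdf_mul V (f g : V -> R[i]) : cdiffC f -> cdiffC g ->
  cdiffC (fun q => f q * g q) /\ forall p v, cD (fun q => f q * g q) p v = cD f p v * g p + f p * cD g p v.
Proof.
move=> df dg.
have h1 q : cre (f q * g q) = cre (f q) * cre (g q) - cim (f q) * cim (g q).
  by case: (f q) => ? ?; case: (g q).
have h2 q : cim (f q * g q) = cre (f q) * cim (g q) + cim (f q) * cre (g q).
  by case: (f q) => ? ?; case: (g q).
set F1 := (fun q => cre (f q)); set F2 := (fun q => cim (f q)).
set G1 := (fun q => cre (g q)); set G2 := (fun q => cim (g q)).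
have e1 : (fun q => cre (f q * g q)) = F1 * G1 - F2 * G2.
  by apply: funext => q; rewrite h1.
have e2 : (fun q => cim (f q * g q)) = F1 * G2 + F2 * G1.
  by apply: funext => q; rewrite h2.
split.
  move=> p; rewrite e1 e2; have [? ?] := df p; have [? ?] := dg p.
  by split; [apply: differentiableB|apply: differentiableD]; apply: differentiableM.
move=> p v; rewrite /cD e1 e2; have [a1 b1] := df p; have [a2 b2] := dg p.
have d1 : derivable F1 p v := @diff_derivable _ _ _ _ _ v a1.
have d2 : derivable F2 p v := @diff_derivable _ _ _ _ _ v b1.
have d3 : derivable G1 p v := @diff_derivable _ _ _ _ _ v a2.
have d4 : derivable G2 p v := @diff_derivable _ _ _ _ _ v b2.
have E1 : 'D_v (F1 * G1 - F2 * G2) p = 'D_v (F1 * G1) p - 'D_v (F2 * G2) p :=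
  deriveB (derivableM d1 d3) (derivableM d2 d4).
have E2 : 'D_v (F1 * G2 + F2 * G1) p = 'D_v (F1 * G2) p + 'D_v (F2 * G1) p :=
  deriveD (derivableM d1 d4) (derivableM d2 d3).
rewrite E1 E2 (deriveM d1 d3) (deriveM d2 d4) (deriveM d1 d4) (deriveM d2 d3).
rewrite /F1 /F2 /G1 /G2.
move: ('D_v _ p) ('D_v _ p) ('D_v _ p) ('D_v _ p) => A B C D.
case: (f p) => a b; case: (g p) => c d /=.
rewrite /GRing.scale /=.
congr Complex; ring.
Qed.

Lemma cdf_conj V (f : V -> R[i]) : cdiffC f ->
  cdiffC (fun q => conjc (f q)) /\ forall p v, cD (fun q => conjc (f q)) p v = conjc (cD f p v).
Proof.
move=> df.
have h2 q : cim (conjc (f q)) = - cim (f q) by case: (f q).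
have e2 : (fun q => cim (conjc (f q))) = - (fun q => cim (f q)).
  by apply: funext => q; rewrite h2.
have e1 : (fun q => cre (conjc (f q))) = (fun q => cre (f q)).
  by apply: funext => q; case: (f q).
split.
  by move=> p; rewrite e1 e2; have [? ?] := df p; split => //; apply: differentiableN.
move=> p v; rewrite /cD e1 e2; have [? ?] := df p.
by rewrite deriveN //; exact: diff_derivable.
Qed.

Lemma cdf_cst V (c : R[i]) : cdiffC (fun _ : V => c) /\ forall p v, cD (fun _ : V => c) p v = 0.
Proof.
split; first by move=> p; split; exact: differentiable_cst.
by move=> p v; rewrite /cD !derive_cst.
Qed.

Lemma cdf_sum V k (f : 'I_k -> V -> R[i]) : (forall t, cdiffC (f t)) ->
  cdiffC (fun q => \sum_t f t q) /\ forall p v, cD (fun q => \sum_t f t q) p v = \sum_t cD (f t) p v.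
Proof.
move=> df; elim: k f df => [|k IH] f df.
  have -> : (fun q => \sum_(t < 0) f t q) = fun _ => 0.
    by apply: funext => q; rewrite big_ord0.
  by have [? ?] := @cdf_cst V 0; split => // p v; rewrite big_ord0.
have -> : (fun q => \sum_(t < k.+1) f t q) = fun q => f ord0 q + \sum_(t < k) f (lift ord0 t) q.
  by apply: funext => q; rewrite big_ord_recl.
have [d1 e1] := IH (fun t => f (lift ord0 t)) (fun t => df _).
have [d2 e2] := cdf_add (df ord0) d1.
by split => // p v; rewrite e2 e1 big_ord_recl.
Qed.

Lemma fst_cont (V W : normedModType R) : continuous (fun x : V * W => x.1).
Proof. by move=> x; exact: cvg_fst. Qed.
Lemma snd_cont (V W : normedModType R) : continuous (fun x : V * W => x.2).
Proof. by move=> x; exact: cvg_snd. Qed.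

Lemma lin_diff (V W : normedModType R) (f : V -> W) :
  linear f -> continuous f -> forall x, differentiable f x /\ forall v, 'D_v f x = f v.
Proof.
move=> lf cf x.
pose fL : {linear V -> W} := HB.pack f (GRing.isLinear.Build _ _ _ _ _ lf).
have -> : f = fL by [].
split; first exact: linear_differentiable.
move=> v; rewrite deriveE; last exact: linear_differentiable.
by rewrite diff_lin.
Qed.

Lemma coord_re a (V : normedModType R) (pr : V -> cvec R a) (l : 'I_a) :
  linear pr -> continuous pr ->
  (forall x, differentiable (fun q => (pr q).1 0 l) x /\ forall v, 'D_v (fun q => (pr q).1 0 l) x = (pr v).1 0 l) /\
  (forall x, differentiable (fun q => (pr q).2 0 l) x /\ forall v, 'D_v (fun q => (pr q).2 0 l) x = (pr v).2 0 l).
Proof.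
move=> lp cp; split; apply: lin_diff.
- by move=> c u w; rewrite lp /= !mxE.
- move=> x; apply: (@continuous_comp _ _ _ pr (fun y : cvec R a => y.1 0 l)); first exact: cp.
  apply: (@continuous_comp _ _ _ (fun y : cvec R a => y.1) (fun y : 'rV[R]_a => y 0 l)); first exact: fst_cont.
  exact: coord_continuous.
- by move=> c u w; rewrite lp /= !mxE.
- move=> x; apply: (@continuous_comp _ _ _ pr (fun y : cvec R a => y.2 0 l)); first exact: cp.
  apply: (@continuous_comp _ _ _ (fun y : cvec R a => y.2) (fun y : 'rV[R]_a => y 0 l)); first exact: snd_cont.
  exact: coord_continuous.
Qed.

Lemma cD_coord a (V : normedModType R) (pr : V -> cvec R a) (l : 'I_a) :
  linear pr -> continuous pr ->
  cdiffC (fun q => cvec_to (pr q) l) /\ forall p v, cD (fun q => cvec_to (pr q) l) p v = cvec_to (pr v) l.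
Proof.
move=> lp cp; have [h1 h2] := coord_re l lp cp.
split; first by move=> p; split; [exact: (h1 p).1|exact: (h2 p).1].
by move=> p v; rewrite /cD /= (h1 p).2 (h2 p).2.
Qed.

Lemma cplx_t2 (a b : R) : Complex a b = Complex a 0 + 'i * Complex b 0.
Proof. change (Complex a b = Complex (a + (0 * b - 1 * 0)) (0 + (0 * 0 + 1 * b))). congr Complex; ring. Qed.
Lemma cplx_ii : 'i * 'i = -1 :> R[i].
Proof. change (Complex (0 * 0 - 1 * 1) (0 * 1 + 1 * 0) = Complex (-1) (-0) :> R[i]). congr Complex; ring. Qed.
Lemma cplx_cj (a b : R) : conjc (Complex a b) = Complex a 0 - 'i * Complex b 0.
Proof. change (Complex a (-b) = Complex (a - (0 * b - 1 * 0)) (0 - (0 * 0 + 1 * b))). congr Complex; ring. Qed.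

Lemma wid (a b : R) (X Y : R[i]) :
  Complex a 0 * X + Complex b 0 * Y =
  Complex a b * ((X - 'i * Y) / 2%:R) + conjc (Complex a b) * ((X + 'i * Y) / 2%:R).
Proof.
rewrite (cplx_cj a b) (cplx_t2 a b); move: (Complex a 0) (Complex b 0) cplx_ii; move: ('i : R[i]) => j A B hj.
transitivity (A * X - j * j * (B * Y)); first by rewrite hj; ring.
by field.
Qed.

Lemma cD_dirD V (f : V -> R[i]) p v w : cdiffC f -> cD f p (v + w) = cD f p v + cD f p w.
Proof. by move=> /(_ p) [d1 d2]; rewrite /cD !deriveE // !linearD. Qed.

Lemma cD_dirZ V (f : V -> R[i]) p a v : cdiffC f -> cD f p (a *: v) = Complex a 0 * cD f p v.
Proof.
move=> /(_ p) [d1 d2]; rewrite /cD !deriveE // !linearZ /=.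
by congr Complex; rewrite /GRing.scale /= mul0r ?subr0 ?addr0.
Qed.

Lemma cD_dir0 V (f : V -> R[i]) p : cdiffC f -> cD f p 0 = 0.
Proof. by move=> df; have := cD_dirD p 0 0 df; rewrite addr0 => /eqP; rewrite addrC -subr_eq subrr eq_sym => /eqP. Qed.

Lemma cD_dirsum V k (f : V -> R[i]) p (v : 'I_k -> V) : cdiffC f ->
  cD f p (\sum_t v t) = \sum_t cD f p (v t).
Proof.
move=> df; elim: k v => [|k IH] v; first by rewrite !big_ord0 cD_dir0.
by rewrite !big_ord_recl cD_dirD // IH.
Qed.

Lemma cvec_decomp a (x : cvec R a) :
  x = \sum_l (x.1 0 l *: dirRe R l + x.2 0 l *: dirIm R l).
Proof.
have hf : forall k (F : 'I_k -> cvec R a), (\sum_t F t).1 = \sum_t (F t).1.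
  by move=> k F; elim/big_rec2: _ => // t y1 y2 _ <-.
have hs : forall k (F : 'I_k -> cvec R a), (\sum_t F t).2 = \sum_t (F t).2.
  by move=> k F; elim/big_rec2: _ => // t y1 y2 _ <-.
case: x => x1 x2; apply: injective_projections; rewrite /= ?hf ?hs /=.
  rewrite [LHS]row_sum_delta; apply: eq_bigr => l _ /=.
  by rewrite scaler0 addr0.
rewrite [LHS]row_sum_delta; apply: eq_bigr => l _ /=.
by rewrite scaler0 add0r.
Qed.

Lemma sum_fst (V W : normedModType R) k (F : 'I_k -> V * W) : (\sum_t F t).1 = \sum_t (F t).1.
Proof. by elim/big_rec2: _ => // t y1 y2 _ <-. Qed.
Lemma sum_snd (V W : normedModType R) k (F : 'I_k -> V * W) : (\sum_t F t).2 = \sum_t (F t).2.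
Proof. by elim/big_rec2: _ => // t y1 y2 _ <-. Qed.

Definition dZb a b (f : cvec R a * cvec R b -> R[i]) q (k : 'I_a) : R[i] :=
  wzb f q (@dirRe R a k, 0) (@dirIm R a k, 0).

Lemma fst_add (V W : normedModType R) (x y : V * W) : (x + y).1 = x.1 + y.1. Proof. by []. Qed.
Lemma snd_add (V W : normedModType R) (x y : V * W) : (x + y).2 = x.2 + y.2. Proof. by []. Qed.
Lemma fst_scale (V W : normedModType R) (c : R) (x : V * W) : (c *: x).1 = c *: x.1. Proof. by []. Qed.
Lemma snd_scale (V W : normedModType R) (c : R) (x : V * W) : (c *: x).2 = c *: x.2. Proof. by []. Qed.

Lemma W_decomp a b (w : cvec R a * cvec R b) :
  w = \sum_l (w.1.1 0 l *: (dirRe R l, 0) + w.1.2 0 l *: (dirIm R l, 0))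
    + \sum_i (w.2.1 0 i *: (0, dirRe R i) + w.2.2 0 i *: (0, dirIm R i)).
Proof.
case: w => w1 w2; apply: injective_projections; rewrite ?fst_add ?snd_add ?sum_fst ?sum_snd.
  under eq_bigr => l _ do rewrite fst_add !fst_scale /=.
  under [X in _ = _ + X]eq_bigr => i _ do rewrite fst_add !fst_scale /= !scaler0 addr0.
  by rewrite big1_eq addr0 /= [LHS]cvec_decomp.
under eq_bigr => l _ do rewrite snd_add !snd_scale /= !scaler0 addr0.
under [X in _ = _ + X]eq_bigr => i _ do rewrite snd_add !snd_scale /=.
by rewrite big1_eq add0r /= [LHS]cvec_decomp.
Qed.

Lemma cD_W a b (f : cvec R a * cvec R b -> R[i]) p w : cdiffC f ->
  cD f p w = \sum_l (cvec_to w.1 l * dZ f p l + conjc (cvec_to w.1 l) * dZb f p l)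
           + \sum_i (cvec_to w.2 i * dW f p i + conjc (cvec_to w.2 i) * dWb f p i).
Proof.
move=> df; rewrite [in LHS](W_decomp w) cD_dirD // !cD_dirsum //.
congr (_ + _); apply: eq_bigr => l _; rewrite cD_dirD // !cD_dirZ //; exact: wid.
Qed.

Lemma cD_chain (V : normedModType R) a b (f : cvec R a * cvec R b -> R[i]) (phi : V -> cvec R a * cvec R b) :
  cdiffC f -> (forall q, differentiable phi q) -> forall q v,
  cD (fun q => f (phi q)) q v =
    \sum_l (cD (fun q => cvec_to (phi q).1 l) q v * dZ f (phi q) l
           + cD (fun q => conjc (cvec_to (phi q).1 l)) q v * dZb f (phi q) l)
  + \sum_i (cD (fun q => cvec_to (phi q).2 i) q v * dW f (phi q) i
           + cD (fun q => conjc (cvec_to (phi q).2 i)) q v * dWb f (phi q) i).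
Proof.
move=> df dp q v; rewrite (cdf_comp df dp).2 cD_W //.
have l1 : linear (fun x : cvec R a * cvec R b => x.1) by [].
have l2 : linear (fun x : cvec R a * cvec R b => x.2) by [].
have E1 l : cD (fun q => cvec_to (phi q).1 l) q v = cvec_to ('D_v phi q).1 l.
  have [c1 e1] := cD_coord l l1 (@fst_cont _ _).
  by rewrite (cdf_comp c1 dp).2 e1.
have E2 l : cD (fun q => cvec_to (phi q).2 l) q v = cvec_to ('D_v phi q).2 l.
  have [c1 e1] := cD_coord l l2 (@snd_cont _ _).
  by rewrite (cdf_comp c1 dp).2 e1.
have E3 l : cD (fun q => conjc (cvec_to (phi q).1 l)) q v = conjc (cvec_to ('D_v phi q).1 l).
  have [c1 e1] := cD_coord l l1 (@fst_cont _ _).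
  by rewrite (cdf_conj (cdf_comp c1 dp).1).2 -E1 (cdf_comp c1 dp).2 e1.
have E4 l : cD (fun q => conjc (cvec_to (phi q).2 l)) q v = conjc (cvec_to ('D_v phi q).2 l).
  have [c1 e1] := cD_coord l l2 (@snd_cont _ _).
  by rewrite (cdf_conj (cdf_comp c1 dp).1).2 -E2 (cdf_comp c1 dp).2 e1.
by congr (_ + _); apply: eq_bigr => l _; rewrite ?E1 ?E2 ?E3 ?E4.
Qed.

Lemma sum_lc k (x1 y1 x2 y2 D1 D2 : 'I_k -> R[i]) (j : R[i]) :
  \sum_l ((x1 l - j * y1 l) / 2%:R * D1 l + (x2 l - j * y2 l) / 2%:R * D2 l) =
  (\sum_l (x1 l * D1 l + x2 l * D2 l) - j * \sum_l (y1 l * D1 l + y2 l * D2 l)) / 2%:R.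
Proof.
rewrite mulr_sumr -sumrB mulr_suml; apply: eq_bigr => l _; ring.
Qed.

Lemma wzE V (f : V -> R[i]) p vx vy : wz f p vx vy = (cD f p vx - 'i * cD f p vy) / 2%:R.
Proof. by []. Qed.
Lemma wzbE V (f : V -> R[i]) p vx vy : wzb f p vx vy = (cD f p vx - (- 'i) * cD f p vy) / 2%:R.
Proof. by rewrite /wzb mulNr opprK. Qed.

Lemma chain_gen (V : normedModType R) a b (f : cvec R a * cvec R b -> R[i]) (phi : V -> cvec R a * cvec R b) (j : R[i]) q vx vy :
  cdiffC f -> (forall q, differentiable phi q) ->
  let W h := (cD h q vx - j * cD h q vy) / 2%:R in
  W (fun q => f (phi q)) =
    \sum_l (W (fun q => cvec_to (phi q).1 l) * dZ f (phi q) l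
           + W (fun q => conjc (cvec_to (phi q).1 l)) * dZb f (phi q) l)
  + \sum_i (W (fun q => cvec_to (phi q).2 i) * dW f (phi q) i
           + W (fun q => conjc (cvec_to (phi q).2 i)) * dWb f (phi q) i).
Proof.
move=> df dp W; rewrite /W !(cD_chain df dp) !sum_lc.
set A := \sum_l _; set B := \sum_l _; set C := \sum_l _; set D := \sum_l _.
by rewrite -mulrDl; congr (_ * _); ring.
Qed.

Lemma wz_chain (V : normedModType R) a b (f : cvec R a * cvec R b -> R[i]) (phi : V -> cvec R a * cvec R b) q vx vy :
  cdiffC f -> (forall q, differentiable phi q) ->
  wz (fun q => f (phi q)) q vx vy =
    \sum_l (wz (fun q => cvec_to (phi q).1 l) q vx vy * dZ f (phi q) l
           + wz (fun q => conjc (cvec_to (phi q).1 l)) q vx vy * dZb f (phi q) l)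
  + \sum_i (wz (fun q => cvec_to (phi q).2 i) q vx vy * dW f (phi q) i
           + wz (fun q => conjc (cvec_to (phi q).2 i)) q vx vy * dWb f (phi q) i).
Proof. move=> df dp; rewrite !wzE; exact: (@chain_gen V a b f phi 'i q vx vy df dp). Qed.

Lemma wzb_chain (V : normedModType R) a b (f : cvec R a * cvec R b -> R[i]) (phi : V -> cvec R a * cvec R b) q vx vy :
  cdiffC f -> (forall q, differentiable phi q) ->
  wzb (fun q => f (phi q)) q vx vy =
    \sum_l (wzb (fun q => cvec_to (phi q).1 l) q vx vy * dZ f (phi q) l
           + wzb (fun q => conjc (cvec_to (phi q).1 l)) q vx vy * dZb f (phi q) l)
  + \sum_i (wzb (fun q => cvec_to (phi q).2 i) q vx vy * dW f (phi q) i
           + wzb (fun q => conjc (cvec_to (phi q).2 i)) q vx vy * dWb f (phi q) i).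
Proof. move=> df dp; rewrite wzbE; have /= -> := (@chain_gen V a b f phi (- 'i) q vx vy df dp).
by congr (_ + _); apply: eq_bigr => l _; rewrite !wzbE. Qed.

Lemma conj_i : conjc ('i : R[i]) = - 'i.
Proof. change (Complex 0 (-1) = Complex (-0) (-1) :> R[i]); by rewrite oppr0. Qed.

Lemma conjcM (x y : R[i]) : conjc (x * y) = conjc x * conjc y. Proof. exact: rmorphM. Qed.
Lemma conjcD (x y : R[i]) : conjc (x + y) = conjc x + conjc y. Proof. exact: rmorphD. Qed.
Lemma conjcB (x y : R[i]) : conjc (x - y) = conjc x - conjc y. Proof. exact: rmorphB. Qed.
Lemma two_neq0 : (2%:R : R[i]) != 0. Proof. by rewrite pnatr_eq0. Qed.
Lemma conj_half : conjc ((2%:R : R[i])^-1) = 2%:R^-1.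
Proof.
have e : conjc ((2%:R : R[i])^-1) * 2%:R = 1.
  by rewrite -{2}(@conjc_nat _ 2) -rmorphM mulVf ?two_neq0 // rmorph1.
by apply: (mulIf two_neq0); rewrite e mulVf ?two_neq0.
Qed.

Lemma wz_mul V (f g : V -> R[i]) p vx vy : cdiffC f -> cdiffC g ->
  wz (fun q => f q * g q) p vx vy = wz f p vx vy * g p + f p * wz g p vx vy.
Proof. by move=> df dg; rewrite !wzE !(cdf_mul df dg).2; field. Qed.
Lemma wzb_mul V (f g : V -> R[i]) p vx vy : cdiffC f -> cdiffC g ->
  wzb (fun q => f q * g q) p vx vy = wzb f p vx vy * g p + f p * wzb g p vx vy.
Proof. by move=> df dg; rewrite !wzbE !(cdf_mul df dg).2; field. Qed.
Lemma wz_conj V (f : V -> R[i]) p vx vy : cdiffC f ->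
  wz (fun q => conjc (f q)) p vx vy = conjc (wzb f p vx vy).
Proof.
move=> df; rewrite /wz /wzb !(cdf_conj df).2 conjcM conj_half conjcD conjcM conj_i.
by rewrite mulNr.
Qed.
Lemma wzb_conj V (f : V -> R[i]) p vx vy : cdiffC f ->
  wzb (fun q => conjc (f q)) p vx vy = conjc (wz f p vx vy).
Proof.
move=> df; rewrite /wz /wzb !(cdf_conj df).2 conjcM conj_half conjcB conjcM conj_i.
by rewrite mulNr opprK.
Qed.
Lemma wz_cst V (c : R[i]) p vx vy : wz (fun _ : V => c) p vx vy = 0.
Proof. by rewrite wzE !(cdf_cst V c).2 mulr0 subr0 mul0r. Qed.
Lemma wzb_cst V (c : R[i]) p vx vy : wzb (fun _ : V => c) p vx vy = 0.
Proof. by rewrite wzbE !(cdf_cst V c).2 mulr0 subr0 mul0r. Qed.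
Lemma wz_sum V k (f : 'I_k -> V -> R[i]) p vx vy : (forall t, cdiffC (f t)) ->
  wz (fun q => \sum_t f t q) p vx vy = \sum_t wz (f t) p vx vy.
Proof.
move=> df; rewrite wzE !(cdf_sum df).2 mulr_sumr -sumrB mulr_suml.
by apply: eq_bigr => t _; rewrite wzE.
Qed.
Lemma wzb_sum V k (f : 'I_k -> V -> R[i]) p vx vy : (forall t, cdiffC (f t)) ->
  wzb (fun q => \sum_t f t q) p vx vy = \sum_t wzb (f t) p vx vy.
Proof.
move=> df; rewrite wzbE !(cdf_sum df).2 mulr_sumr -sumrB mulr_suml.
by apply: eq_bigr => t _; rewrite wzbE.
Qed.
Lemma wz_comp (U V : normedModType R) (f : V -> R[i]) (phi : U -> V) p vx vy :
  cdiffC f -> (forall q, differentiable phi q) ->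
  wz (fun q => f (phi q)) p vx vy = wz f (phi p) ('D_vx phi p) ('D_vy phi p).
Proof. by move=> df dp; rewrite !wzE !(cdf_comp df dp).2. Qed.
Lemma wzb_comp (U V : normedModType R) (f : V -> R[i]) (phi : U -> V) p vx vy :
  cdiffC f -> (forall q, differentiable phi q) ->
  wzb (fun q => f (phi q)) p vx vy = wzb f (phi p) ('D_vx phi p) ('D_vy phi p).
Proof. by move=> df dp; rewrite !wzbE !(cdf_comp df dp).2. Qed.

End Gen.

Section Alg.
Variable R : realType.

Lemma alg_block (m d : nat) (P : 'M[R[i]]_(m + d, m)) (Y : 'M[R[i]]_(m + d, d)) (G : 'M[R[i]]_(m + d))
  (c D : 'I_(m + d) -> R[i]) :
  G \in unitmx -> row_mx P Y \in unitmx ->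
  (forall a al, \sum_i \sum_j G i j * Y i a * conjc (P j al) = 0) ->
  let Mm := \matrix_(a, b) \sum_j conjc (P j b) * \sum_i P i a * G i j in
  Mm \in unitmx /\
  forall al, \sum_i invmx (row_mx P Y) (lshift d al) i * (\sum_j invmx G j i * c j + D i)
           = \sum_b invmx Mm b al * \sum_j conjc (P j b) * (c j + \sum_i D i * G i j).
Proof.
move=> Gu Ru hY Mm.
set Rm := row_mx P Y; set Rt := invmx Rm.
set U := usubmx Rt; set Dm := dsubmx Rt.
set Pc := map_mx conjc P.
set K := Pc^T *m G^T.
have RtR : Rt *m Rm = 1%:M by rewrite mulVmx.
have RRt : Rm *m Rt = 1%:M by rewrite mulmxV.
have UP : U *m P = 1%:M.
  have := congr1 (fun X => ulsubmx X) RtR.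
  by rewrite /ulsubmx /U -mul_usub_mx mul_mx_row row_mxKl scalar_mx_block /block_mx col_mxKu row_mxKl.
have UY : U *m Y = 0.
  have := congr1 (fun X => ursubmx X) RtR.
  by rewrite /ursubmx /U -mul_usub_mx mul_mx_row row_mxKr scalar_mx_block /block_mx col_mxKu row_mxKr.
have PU : P *m U + Y *m Dm = 1%:M.
  by rewrite -mul_row_col /U /Dm vsubmxK.
have KE : forall b i, K b i = \sum_j conjc (P j b) * G i j.
  by move=> b i; rewrite mxE; apply: eq_bigr => j _; rewrite /Pc !mxE.
have KY : K *m Y = 0.
  apply/matrixP => b a; rewrite !mxE.
  transitivity (\sum_i \sum_j G i j * Y i a * conjc (P j b)); last exact: hY.
  apply: eq_bigr => i _; rewrite KE mulr_suml; apply: eq_bigr => j _; ring.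
have KG : K *m invmx G^T = Pc^T by rewrite /K -mulmxA mulmxV ?unitmx_tr // mulmx1.
set S := map_mx conjc U.
have SPc : S *m Pc = 1%:M by rewrite -map_mxM UP map_mx1.
have PU' : P *m U = 1%:M - Y *m Dm by rewrite -PU addrK.
have KPU : (K *m P) *m U = K.
  by rewrite -mulmxA PU' mulmxBr mulmx1 mulmxA KY mul0mx subr0.
have inv : (K *m P) *m (U *m invmx G^T *m S^T) = 1%:M.
  by rewrite !mulmxA KPU KG -trmx_mul SPc trmx1.
have KPu : K *m P \in unitmx by case: (mulmx1_unit inv).
have Mm_eq : Mm = (K *m P)^T.
  apply/matrixP => a b; rewrite !mxE.
  under [RHS]eq_bigr => i _ do rewrite KE mulr_suml.
  rewrite exchange_big /=; apply: eq_bigr => j _; rewrite mulr_sumr.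
  by apply: eq_bigr => i _; ring.
have Mu : Mm \in unitmx by rewrite Mm_eq unitmx_tr.
split => // al.
have U_eq : U = invmx (K *m P) *m K.
  apply: (can_inj (mulmxK Ru)) => /=.
  by rewrite (mul_mx_row U P Y) UP UY -mulmxA (mul_mx_row K P Y) KY (mul_mx_row (invmx (K *m P))) mulVmx // mulmx0.
set cv := \col_i c i; set Dv := \col_i D i.
have main : U *m ((invmx G)^T *m cv + Dv) = invmx (K *m P) *m (Pc^T *m cv + K *m Dv).
  by rewrite U_eq -mulmxA mulmxDr mulmxA trmx_inv KG.
have := congr1 (fun X : 'M[R[i]]_(m, 1) => X al 0) main; rewrite mxE => E.
transitivity (\sum_j U al j * ((invmx G)^T *m cv + Dv) j 0).
  apply: eq_bigr => i _; rewrite !mxE; congr (_ * (_ + _)).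
  by apply: eq_bigr => j _; rewrite !mxE.
rewrite E mxE.
apply: eq_bigr => b _.
rewrite Mm_eq -trmx_inv [in RHS]mxE; congr (_ * _).
rewrite [LHS]mxE !mxE.
under [RHS]eq_bigr => j _ do rewrite mulrDr.
rewrite big_split /=; congr (_ + _).
  by apply: eq_bigr => j _; rewrite !mxE.
under eq_bigr => i _ do rewrite KE mxE mulr_suml.
rewrite exchange_big /=; apply: eq_bigr => j _; rewrite mulr_sumr.
by apply: eq_bigr => i _; ring.
Qed.

Lemma alg_main (n m : nat) (hmn : (m <= n)%N) (P : 'M[R[i]]_(n, m)) (Y : 'M[R[i]]_(n, n - m))
  (G : 'M[R[i]]_(n, n)) (c D : 'I_n -> R[i]) :
  G \in unitmx -> Rmat hmn P Y \in unitmx ->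
  (forall a al, \sum_i \sum_j G i j * Y i a * conjc (P j al) = 0) ->
  let Mm := \matrix_(a, b) \sum_j conjc (P j b) * \sum_i P i a * G i j in
  Mm \in unitmx /\
  forall al, \sum_i rho_inv hmn P Y al i * (\sum_j invmx G j i * c j + D i)
           = \sum_b invmx Mm b al * \sum_j conjc (P j b) * (c j + \sum_i D i * G i j).
Proof.
move=> Gu; rewrite /rho_inv /Rmat; move: (subnKC hmn) => e.
move: (n - m)%N Y e => d Y e; subst n.
move=> Ru hY; rewrite !castmx_id in Ru *.
have [Mu H] := alg_block c D Gu Ru hY.
split => // al; rewrite -H; apply: eq_bigr => i _; congr (_ * _).
by congr (invmx _ _ _); apply: val_inj.
Qed.
End Alg.

Section Vals.
Variable R : realType.

Lemma cvec_to_of a (v : 'I_a -> R[i]) i : cvec_to (cvec_of v) i = v i.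
Proof. by rewrite /cvec_to /cvec_of /= !mxE; case: (v i). Qed.

Lemma dirRe_to a (k g : 'I_a) : cvec_to (dirRe R k) g = ((g == k)%:R : R[i]).
Proof. by rewrite /cvec_to /dirRe /= !mxE eqxx /=; case: (g == k). Qed.
Lemma dirIm_to a (k g : 'I_a) : cvec_to (dirIm R k) g = 'i * ((g == k)%:R : R[i]).
Proof.
rewrite /cvec_to /dirIm /= !mxE eqxx /=; case: (g == k).
  by rewrite mulr1.
by rewrite mulr0.
Qed.
Lemma zero_to a (g : 'I_a) : cvec_to (0 : cvec R a) g = 0.
Proof. by rewrite /cvec_to /= !mxE. Qed.

Lemma wz_val a (k g : 'I_a) :
  (cvec_to (dirRe R k) g - 'i * cvec_to (dirIm R k) g) / 2%:R = (g == k)%:R.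
Proof.
rewrite dirRe_to dirIm_to mulrA cplx_ii; move: ((g == k)%:R : R[i]) => x.
by field.
Qed.
Lemma wzb_val a (k g : 'I_a) :
  (cvec_to (dirRe R k) g - (- 'i) * cvec_to (dirIm R k) g) / 2%:R = 0.
Proof.
rewrite dirRe_to dirIm_to mulNr opprK mulrA cplx_ii; move: ((g == k)%:R : R[i]) => x.
by rewrite mulN1r subrr mul0r.
Qed.
Lemma w0_val a (g : 'I_a) (j : R[i]) :
  (cvec_to (0 : cvec R a) g - j * cvec_to (0 : cvec R a) g) / 2%:R = 0.
Proof. by rewrite zero_to mulr0 subr0 mul0r. Qed.

Lemma sum_delta k (F : 'I_k -> R[i]) (a : 'I_k) : \sum_g F g * (g == a)%:R = F a.
Proof.
rewrite (bigD1 a) //= eqxx mulr1 big1 ?addr0 // => g /negbTE ->; by rewrite mulr0.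
Qed.
Lemma sum_delta' k (F : 'I_k -> R[i]) (a : 'I_k) : \sum_g (g == a)%:R * F g = F a.
Proof. by rewrite -(sum_delta F a); apply: eq_bigr => g _; rewrite mulrC. Qed.

End Vals.

Section Main.
Variables (R : realType) (n m : nat) (rho : cvec R n -> 'M[R[i]]_(n, m))
  (L : cvec R n * cvec R n -> R).
Hypothesis Hhol : forall (i : 'I_n) (a : 'I_m), holomorphic (fun z => rho z i a).
Hypothesis HL : twice_differentiable L.

Local Notation V := (cvec R n * cvec R m)%type.
Local Notation W := (cvec R n * cvec R n)%type.

Definition RHO i g : V -> R[i] := fun q => rho q.1 i g.
Definition UC g : V -> R[i] := fun q => cvec_to q.2 g.
Definition ZC l : V -> R[i] := fun q => cvec_to q.1 l.
Definition EC i : V -> R[i] := fun q => \sum_g RHO i g q * UC g q.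
Definition phi : V -> W := fun q => (q.1, eta_of rho q).
Definition FF j : W -> R[i] := fun p => dWb (liftC L) p j.

Definition zx k : V := (dirRe R k, 0).
Definition zy k : V := (dirIm R k, 0).
Definition ux a : V := (0, dirRe R a).
Definition uy a : V := (0, dirIm R a).

Lemma fst_lin : linear (fun q : V => q.1). Proof. by []. Qed.
Lemma snd_lin : linear (fun q : V => q.2). Proof. by []. Qed.
Lemma fst_d q : differentiable (fun q : V => q.1) q /\ forall v, 'D_v (fun q : V => q.1) q = v.1.
Proof. exact: (lin_diff fst_lin (@fst_cont _ _ _)). Qed.

Lemma rho_cdf i g : cdiffC (fun z => rho z i g).
Proof. move=> z; have := Hhol i g z; by case=> d1 d2 _; split. Qed.

Lemma RHO_cdf i g : cdiffC (RHO i g).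
Proof. exact: (cdf_comp (rho_cdf i g) (fun q => (fst_d q).1)).1. Qed.

Lemma RHO_wz_z i g q k : wz (RHO i g) q (zx k) (zy k) = dz1 (fun z => rho z i g) q.1 k.
Proof.
by rewrite /RHO (@wz_comp R V _ (fun z => rho z i g) (fun q : V => q.1) q _ _ (rho_cdf i g) (fun q => (fst_d q).1)) !(fst_d q).2.
Qed.
Lemma RHO_wzb_z i g q k : wzb (RHO i g) q (zx k) (zy k) = 0.
Proof.
rewrite /RHO (@wzb_comp R V _ (fun z => rho z i g) (fun q : V => q.1) q _ _ (rho_cdf i g) (fun q => (fst_d q).1)) !(fst_d q).2.
by have := Hhol i g q.1; case=> _ _ H; exact: (H k).
Qed.
Lemma RHO_wz_u i g q a : wz (RHO i g) q (ux a) (uy a) = 0.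
Proof.
rewrite /RHO (@wz_comp R V _ (fun z => rho z i g) (fun q : V => q.1) q _ _ (rho_cdf i g) (fun q => (fst_d q).1)) !(fst_d q).2 /=.
rewrite wzE !cD_dir0; try exact: rho_cdf.
by rewrite mulr0 subr0 mul0r.
Qed.
Lemma RHO_wzb_u i g q a : wzb (RHO i g) q (ux a) (uy a) = 0.
Proof.
rewrite /RHO (@wzb_comp R V _ (fun z => rho z i g) (fun q : V => q.1) q _ _ (rho_cdf i g) (fun q => (fst_d q).1)) !(fst_d q).2 /=.
rewrite wzbE !cD_dir0; try exact: rho_cdf.
by rewrite mulr0 subr0 mul0r.
Qed.

Lemma UC_cdf g : cdiffC (UC g). Proof. exact: (cD_coord g snd_lin (@snd_cont _ _ _)).1. Qed.
Lemma UC_cD g q v : cD (UC g) q v = cvec_to v.2 g.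
Proof. exact: (cD_coord g snd_lin (@snd_cont _ _ _)).2. Qed.
Lemma ZC_cdf l : cdiffC (ZC l). Proof. exact: (cD_coord l fst_lin (@fst_cont _ _ _)).1. Qed.
Lemma ZC_cD l q v : cD (ZC l) q v = cvec_to v.1 l.
Proof. exact: (cD_coord l fst_lin (@fst_cont _ _ _)).2. Qed.

Lemma UC_wz_u g q a : wz (UC g) q (ux a) (uy a) = (g == a)%:R.
Proof. by rewrite wzE !UC_cD wz_val. Qed.
Lemma UC_wzb_u g q a : wzb (UC g) q (ux a) (uy a) = 0.
Proof. by rewrite wzbE !UC_cD wzb_val. Qed.
Lemma UC_wz_z g q k : wz (UC g) q (zx k) (zy k) = 0.
Proof. by rewrite wzE !UC_cD w0_val. Qed.
Lemma UC_wzb_z g q k : wzb (UC g) q (zx k) (zy k) = 0.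
Proof. by rewrite wzbE !UC_cD w0_val. Qed.
Lemma ZC_wz_z l q k : wz (ZC l) q (zx k) (zy k) = (l == k)%:R.
Proof. by rewrite wzE !ZC_cD wz_val. Qed.
Lemma ZC_wzb_z l q k : wzb (ZC l) q (zx k) (zy k) = 0.
Proof. by rewrite wzbE !ZC_cD wzb_val. Qed.
Lemma ZC_wz_u l q a : wz (ZC l) q (ux a) (uy a) = 0.
Proof. by rewrite wzE !ZC_cD w0_val. Qed.
Lemma ZC_wzb_u l q a : wzb (ZC l) q (ux a) (uy a) = 0.
Proof. by rewrite wzbE !ZC_cD w0_val. Qed.

Lemma EC_cdf i : cdiffC (EC i).
Proof.
have h g : cdiffC (fun q => RHO i g q * UC g q) := (cdf_mul (RHO_cdf i g) (UC_cdf g)).1.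
exact: (@cdf_sum R V m (fun g q => RHO i g q * UC g q) h).1.
Qed.

Lemma EC_wz i q vx vy : wz (EC i) q vx vy =
  \sum_g (wz (RHO i g) q vx vy * UC g q + RHO i g q * wz (UC g) q vx vy).
Proof.
have h g : cdiffC (fun q => RHO i g q * UC g q) := (cdf_mul (RHO_cdf i g) (UC_cdf g)).1.
rewrite /EC (@wz_sum R V m (fun g q => RHO i g q * UC g q)) //.
by apply: eq_bigr => g _; rewrite wz_mul //; [exact: RHO_cdf|exact: UC_cdf].
Qed.
Lemma EC_wzb i q vx vy : wzb (EC i) q vx vy =
  \sum_g (wzb (RHO i g) q vx vy * UC g q + RHO i g q * wzb (UC g) q vx vy).
Proof.
have h g : cdiffC (fun q => RHO i g q * UC g q) := (cdf_mul (RHO_cdf i g) (UC_cdf g)).1.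
rewrite /EC (@wzb_sum R V m (fun g q => RHO i g q * UC g q)) //.
by apply: eq_bigr => g _; rewrite wzb_mul //; [exact: RHO_cdf|exact: UC_cdf].
Qed.

Lemma EC_wz_z i q k : wz (EC i) q (zx k) (zy k) =
  \sum_g dz1 (fun z => rho z i g) q.1 k * UC g q.
Proof.
by rewrite EC_wz; apply: eq_bigr => g _; rewrite RHO_wz_z UC_wz_z mulr0 addr0.
Qed.
Lemma EC_wzb_z i q k : wzb (EC i) q (zx k) (zy k) = 0.
Proof.
by rewrite EC_wzb big1 // => g _; rewrite RHO_wzb_z UC_wzb_z mulr0 mul0r addr0.
Qed.
Lemma EC_wz_u i q a : wz (EC i) q (ux a) (uy a) = rho q.1 i a.
Proof.
rewrite EC_wz; under eq_bigr => g _ do rewrite RHO_wz_u UC_wz_u mul0r add0r.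
exact: sum_delta.
Qed.
Lemma EC_wzb_u i q a : wzb (EC i) q (ux a) (uy a) = 0.
Proof.
by rewrite EC_wzb big1 // => g _; rewrite RHO_wzb_u UC_wzb_u mulr0 mul0r addr0.
Qed.

Lemma eta_to q i : cvec_to (eta_of rho q) i = EC i q.
Proof. by rewrite /eta_of cvec_to_of. Qed.

Lemma row_diff a (h : 'I_a -> V -> R) :
  (forall i p, differentiable (h i) p) -> forall p, differentiable (fun q => \row_i h i q : 'rV[R]_a) p.
Proof.
move=> dh p.
have -> : (fun q => \row_i h i q : 'rV[R]_a) = \sum_i (fun q => h i q *: ('e_i : 'rV[R]_a)).
  apply: funext => q; rewrite fct_sumE [LHS]row_sum_delta.
  by apply: eq_bigr => i _; rewrite mxE.
apply: differentiable_sum => i; exact: differentiableZl.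
Qed.

Lemma phi_diff q : differentiable phi q.
Proof.
apply: differentiable_pair; first exact: (fst_d q).1.
apply: differentiable_pair; apply: row_diff => i p.
  exact: ((EC_cdf i) p).1.
exact: ((EC_cdf i) p).2.
Qed.

Lemma liftL_cdf : cdiffC (liftC L).
Proof. by move=> p; split; [exact: HL.1|exact: differentiable_cst]. Qed.

Lemma cD_liftL p v : cD (liftC L) p v = Complex ('D_v L p) 0.
Proof. by rewrite /cD derive_cst. Qed.

Lemma cD_liftL_cdf v : cdiffC (fun p => cD (liftC L) p v).
Proof.
have -> : (fun p => cD (liftC L) p v) = (fun p => Complex ('D_v L p) ((fun _ => 0) p)).
  by apply: funext => p; rewrite cD_liftL.
move=> p; split; first exact: HL.2.
exact: differentiable_cst.
Qed.

Lemma FF_cdf j : cdiffC (FF j).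
Proof.
have h1 := cD_liftL_cdf (0, dirRe R j).
have h2 := cD_liftL_cdf (0, dirIm R j).
have c1 := (@cdf_cst R W 'i).1.
have c2 := (@cdf_cst R W (2%:R^-1)).1.
have := (cdf_mul (cdf_add h1 (cdf_mul c1 h2).1).1 c2).1.
by [].
Qed.

Lemma wz_phi (f : W -> R[i]) q vx vy : cdiffC f ->
  wz (fun q => f (phi q)) q vx vy =
    \sum_l (wz (ZC l) q vx vy * dZ f (phi q) l + conjc (wzb (ZC l) q vx vy) * dZb f (phi q) l)
  + \sum_i (wz (EC i) q vx vy * dW f (phi q) i + conjc (wzb (EC i) q vx vy) * dWb f (phi q) i).
Proof.
move=> df; rewrite (wz_chain q vx vy df phi_diff); congr (_ + _); apply: eq_bigr => l _.
  by rewrite wz_conj //; exact: ZC_cdf.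
have E : (fun q0 => cvec_to (phi q0).2 l) = EC l by apply: funext => q0; exact: eta_to.
by rewrite wz_conj E //; exact: EC_cdf.
Qed.

Lemma wzb_phi (f : W -> R[i]) q vx vy : cdiffC f ->
  wzb (fun q => f (phi q)) q vx vy =
    \sum_l (wzb (ZC l) q vx vy * dZ f (phi q) l + conjc (wz (ZC l) q vx vy) * dZb f (phi q) l)
  + \sum_i (wzb (EC i) q vx vy * dW f (phi q) i + conjc (wz (EC i) q vx vy) * dWb f (phi q) i).
Proof.
move=> df; rewrite (wzb_chain q vx vy df phi_diff); congr (_ + _); apply: eq_bigr => l _.
  by rewrite wzb_conj //; exact: ZC_cdf.
have E : (fun q0 => cvec_to (phi q0).2 l) = EC l by apply: funext => q0; exact: eta_to.
by rewrite wzb_conj E //; exact: EC_cdf.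
Qed.

Lemma first_order q b :
  dWb (liftC (Lstar L rho)) q b = \sum_j conjc (RHO j b q) * FF j (phi q).
Proof.
change (wzb (fun q => liftC L (phi q)) q (ux b) (uy b) = \sum_j conjc (RHO j b q) * FF j (phi q)).
rewrite wzb_phi; last exact: liftL_cdf.
have Z : \sum_l (wzb (ZC l) q (ux b) (uy b) * dZ (liftC L) (phi q) l
   + conjc (wz (ZC l) q (ux b) (uy b)) * dZb (liftC L) (phi q) l) = 0.
  by apply: big1 => l _; rewrite ZC_wzb_u ZC_wz_u conjc0 !mul0r addr0.
rewrite -[RHS]add0r; congr (_ + _); first exact: Z.
by apply: eq_bigr => j _; rewrite EC_wzb_u EC_wz_u mul0r add0r.
Qed.

Lemma H_eq b : (fun q => dWb (liftC (Lstar L rho)) q b) = (fun q => \sum_j conjc (RHO j b q) * FF j (phi q)).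
Proof. by apply: funext => q; exact: first_order. Qed.

Lemma term_cdf b j : cdiffC (fun q => conjc (RHO j b q)) /\ cdiffC (fun q => FF j (phi q)).
Proof. by split; [exact: (cdf_conj (RHO_cdf j b)).1|exact: (cdf_comp (FF_cdf j) phi_diff).1]. Qed.

Lemma dZ_H q b k :
  dZ (fun q => dWb (liftC (Lstar L rho)) q b) q k =
  \sum_j conjc (RHO j b q) * (dZ (FF j) (phi q) k
     + \sum_i (\sum_g dz1 (fun z => rho z i g) q.1 k * UC g q) * dW (FF j) (phi q) i).
Proof.
rewrite H_eq /dZ -/(zx k) -/(zy k).
have hc j : cdiffC (fun q => conjc (RHO j b q) * FF j (phi q)).
  by have [c1 c2] := term_cdf b j; exact: (cdf_mul c1 c2).1.
rewrite (@wz_sum R V n (fun j q => conjc (RHO j b q) * FF j (phi q))) //.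
apply: eq_bigr => j _; have [c1 c2] := term_cdf b j.
rewrite wz_mul // wz_conj; last exact: RHO_cdf.
rewrite RHO_wzb_z conjc0 mul0r add0r; congr (_ * _).
rewrite wz_phi; last exact: FF_cdf.
congr (_ + _).
  under eq_bigr => l _ do rewrite ZC_wz_z ZC_wzb_z conjc0 mul0r addr0.
  exact: sum_delta'.
by apply: eq_bigr => i _; rewrite EC_wz_z EC_wzb_z conjc0 mul0r addr0.
Qed.

Lemma gE_eq q a b :
  gE L rho q a b = \sum_j conjc (RHO j b q) * \sum_i rho q.1 i a * dW (FF j) (phi q) i.
Proof.
rewrite /gE mxE H_eq /dW -/(ux a) -/(uy a).
have hc j : cdiffC (fun q => conjc (RHO j b q) * FF j (phi q)).
  by have [c1 c2] := term_cdf b j; exact: (cdf_mul c1 c2).1.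
rewrite (@wz_sum R V n (fun j q => conjc (RHO j b q) * FF j (phi q))) //.
apply: eq_bigr => j _; have [c1 c2] := term_cdf b j.
rewrite wz_mul // wz_conj; last exact: RHO_cdf.
rewrite RHO_wzb_u conjc0 mul0r add0r; congr (_ * _).
rewrite wz_phi; last exact: FF_cdf.
have Z : \sum_l (wz (ZC l) q (ux a) (uy a) * dZ (FF j) (phi q) l
   + conjc (wzb (ZC l) q (ux a) (uy a)) * dZb (FF j) (phi q) l) = 0.
  by apply: big1 => l _; rewrite ZC_wz_u ZC_wzb_u conjc0 !mul0r addr0.
rewrite -[RHS]add0r; congr (_ + _); first exact: Z.
by apply: eq_bigr => i _; rewrite EC_wz_u EC_wzb_u conjc0 mul0r addr0.
Qed.

End Main.


Unset Implicit Arguments.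

Theorem proposition3p3 (R : realType) (n m : nat) (hmn : (m < n)%N)
  (rho : cvec R n -> 'M[R[i]]_(n, m))
  (L : cvec R n * cvec R n -> R)
  (Hhol : forall (i : 'I_n) (a : 'I_m), holomorphic (fun z => rho z i a))
  (Hrank : forall z, \rank (rho z) = m)
  (HL : twice_differentiable L)
  (Hnondeg : forall q, gTM L q \in unitmx)
  (z0 : cvec R n) (u0 : cvec R m)
  (Y : 'M[R[i]]_(n, n - m)) :
  let g0 := gTM L (z0, eta_of rho (z0, u0)) in
  (forall (a : 'I_(n - m)) (al : 'I_m),
      \sum_i \sum_j g0 i j * Y i a * conjc (rho z0 j al) = 0) ->
  (forall (a b : 'I_(n - m)),
      \sum_i \sum_j g0 i j * Y i a * conjc (Y j b) = (a == b)%:R) ->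
  Rmat (ltnW hmn) (rho z0) Y \in unitmx ->
  forall (al : 'I_m) (k : 'I_n),
    \sum_i rho_inv (ltnW hmn) (rho z0) Y al i *
        (NCL L (z0, eta_of rho (z0, u0)) i k
         + \sum_g cvec_to u0 g * dz1 (fun z => rho z i g) z0 k)
    = \sum_b (invmx (gE L rho (z0, u0))) b al *
        dZ (fun q => dWb (liftC (Lstar L rho)) q b) (z0, u0) k.
Proof.
move=> g0 hY _ Ru al k.
have [Mu H] := @alg_main R n m (ltnW hmn) (rho z0) Y g0
  (fun j => dZ (FF L j) (phi rho (z0, u0)) k)
  (fun i => \sum_g cvec_to u0 g * dz1 (fun z => rho z i g) z0 k) (Hnondeg _) Ru hY.
have gEq : gE L rho (z0, u0) =
    \matrix_(a, b) \sum_j conjc (rho z0 j b) * \sum_i rho z0 i a * g0 i j.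
  apply/matrixP => a b; rewrite (gE_eq Hhol HL) mxE.
  apply: eq_bigr => j _; congr (_ * _); apply: eq_bigr => i _.
  by rewrite /g0 /gTM mxE.
rewrite gEq.
etransitivity; first exact: (H al).
apply: eq_bigr => b _; congr (_ * _).
rewrite (dZ_H Hhol HL).
apply: eq_bigr => j _; congr (_ * (_ + _)).
apply: eq_bigr => i _; rewrite /g0 /gTM mxE; congr (_ * _).
by apply: eq_bigr => g _; rewrite mulrC.
Qed.
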